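(* Assume the alphabet $\Sigma$ contains at least two characters. The substring complexity $\delta$ satisfies the following lower bounds on its sensitivity: substitutions: $\mathsf{MS}_{\mathrm{sub}}(\delta,n) \geq 2$ and $\mathsf{AS}_{\mathrm{sub}}(\delta,n) \geq 1$; insertions: $\mathsf{MS}_{\mathrm{ins}}(\delta,n) \geq 2$ and $\mathsf{AS}_{\mathrm{ins}}(\delta,n) \geq 1$; deletions: $\liminf_{n\to\infty}\mathsf{MS}_{\mathrm{del}}(\delta,n) \geq 1.5$ and $\liminf_{n\to\infty}\mathsf{AS}_{\mathrm{del}}(\delta,n) \geq 1$.
   Context: Strings are finite sequences over an alphabet $\Sigma$; $\Sigma^n$ is the set of strings of length $n$. $\mathsf{ed}(T,S)$ is the edit distance (minimum number of single-character substitutions, insertions, deletions turning $T$ into $S$). For a measure $C$ assigning a number $C(T)$ to each string, define $\mathsf{MS}_{\mathrm{sub}}(C,n)=\max_{T\in\Sigma^n}\{C(T')/C(T): T'\in\Sigma^n,\ \mathsf{ed}(T,T')=1\}$, $\mathsf{MS}_{\mathrm{ins}}(C,n)$ and $\mathsf{MS}_{\mathrm{del}}(C,n)$ the same with $T'\in\Sigma^{n+1}$, resp. $T'\in\Sigma^{n-1}$; and $\mathsf{AS}_{\mathrm{sub}},\mathsf{AS}_{\mathrm{ins}},\mathsf{AS}_{\mathrm{del}}$ the same with $C(T')-C(T)$ in place of $C(T')/C(T)$. For a string $T$ of length $n$, $\mathsf{Substr}(T,k)$ is the number of distinct substrings of length $k$ of $T$, and the substring complexity is $\delta(T)=\max_{1\le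 k\le n}\mathsf{Substr}(T,k)/k$. *)

(* Defs.v *)
From HB Require Import structures.
From mathcomp Require Import all_boot all_order all_algebra.
From mathcomp Require Import all_classical all_reals all_analysis.
Set Implicit Arguments. Unset Strict Implicit. Unset Printing Implicit Defensive.
Import Order.TTheory GRing.Theory Num.Theory.
Local Open Scope ring_scope.

Section Strings.
Variable Sigma : eqType.

Fixpoint ed (s : seq Sigma) : seq Sigma -> nat :=
  match s with
  | [::] => fun t => size t
  | x :: s' =>
      fix ed_t (t : seq Sigma) : nat :=
        match t with
        | [::] => size s
        | y :: t' => minn (minn (ed s' t).+1 (ed_t t').+1) (ed s' t' + (x != y))
        end
  end.

Definition Substr (T : seq Sigma) (k : nat) : nat :=
  size (undup [seq take k (drop i T) | i <- iota 0 (size T - k).+1]).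

Definition delta (R : realType) (T : seq Sigma) : R :=
  \big[Num.max/0]_(1 <= k < (size T).+1) ((Substr T k)%:R / k%:R).
End Strings.

Local Open Scope ereal_scope.
Section Sensitivity.
Variables (Sigma : finType) (R : realType) (C : seq Sigma -> R).

Definition MS_sub (n : nat) : \bar R :=
  \big[Order.max/-oo]_(T : n.-tuple Sigma)
    \big[Order.max/-oo]_(T' : n.-tuple Sigma | ed T T' == 1%N) (C T' / C T)%R%:E.
Definition MS_ins (n : nat) : \bar R :=
  \big[Order.max/-oo]_(T : n.-tuple Sigma)
    \big[Order.max/-oo]_(T' : n.+1.-tuple Sigma | ed T T' == 1%N) (C T' / C T)%R%:E.
Definition MS_del (n : nat) : \bar R :=
  \big[Order.max/-oo]_(T : n.-tuple Sigma)
    \big[Order.max/-oo]_(T' : n.-1.-tuple Sigma | ed T T' == 1%N) (C T' / C T)%R%:E.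
Definition AS_sub (n : nat) : \bar R :=
  \big[Order.max/-oo]_(T : n.-tuple Sigma)
    \big[Order.max/-oo]_(T' : n.-tuple Sigma | ed T T' == 1%N) (C T' - C T)%R%:E.
Definition AS_ins (n : nat) : \bar R :=
  \big[Order.max/-oo]_(T : n.-tuple Sigma)
    \big[Order.max/-oo]_(T' : n.+1.-tuple Sigma | ed T T' == 1%N) (C T' - C T)%R%:E.
Definition AS_del (n : nat) : \bar R :=
  \big[Order.max/-oo]_(T : n.-tuple Sigma)
    \big[Order.max/-oo]_(T' : n.-1.-tuple Sigma | ed T T' == 1%N) (C T' - C T)%R%:E.
End Sensitivity.

(* Main.v *)
Require Import Defs.
From HB Require Import structures.
From mathcomp Require Import all_boot all_order all_algebra.
From mathcomp Require Import all_classical all_reals all_analysis.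
From mathcomp Require Import zify ring lra.
Import Order.TTheory GRing.Theory Num.Theory.
Set Implicit Arguments. Unset Strict Implicit. Unset Printing Implicit Defensive.


Section EdLemmas.
Variable Sigma : eqType.
Implicit Types s t p : seq Sigma.

Lemma ed_cons (x y : Sigma) s t :
  ed (x :: s) (y :: t) = minn (minn (ed s (y :: t)).+1 (ed (x :: s) t).+1) (ed s t + (x != y)).
Proof. by []. Qed.

Lemma ed_nil_r s : ed s [::] = size s.
Proof. by case: s. Qed.

Lemma ed_eq0 s t : ed s t = 0 -> s = t.
Proof.
elim: s t => [|x s IH] [|y t] //.
- rewrite ed_cons => /eqP; rewrite !minnE.
  set A := ed s (y :: t); set B := ed (x :: s) t; set C := ed s t.
  move=> H.
  have HC : C + (x != y) = 0.
    move: H; case: (C + (x != y)) => // c; lia.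
  move: HC => /eqP; rewrite addn_eq0 => /andP[/eqP /IH -> ].
  by rewrite eqb0 negbK => /eqP ->.
Qed.

Lemma ed_refl s : ed s s = 0.
Proof.
elim: s => // x s IH; rewrite ed_cons IH eqxx addn0.
by rewrite minn0.
Qed.

Lemma ed_del_nth (x0 : Sigma) d : forall s t, size s = (size t).+1 ->
  (forall i, i < d -> nth x0 s i = nth x0 t i) ->
  (forall i, d <= i -> nth x0 s i.+1 = nth x0 t i) -> ed s t <= 1.
Proof.
elim: d => [|d IH] [|x s] t //.
- move=> [Hs] _ H2.
  have -> : s = t by apply: (eq_from_nth (x0 := x0)) => // i _; exact: H2.
  case: t {Hs H2} => [|y t] //. rewrite ed_cons ed_refl.
  by rewrite geq_min; apply/orP; left; rewrite geq_min leqnn.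
- case: t => [|y t].
    by move=> [/eqP]; rewrite size_eq0 => /eqP -> .
  move=> [Hs] H1 H2.
  have xy : x = y by apply: (H1 0).
  rewrite ed_cons xy eqxx addn0 geq_min; apply/orP; right.
  apply: IH => // [i Hi|i Hi]; [exact: (H1 i.+1)|exact: (H2 i.+1)].
Qed.

Lemma ed_ins_nth (x0 : Sigma) d : forall s t, size t = (size s).+1 ->
  (forall i, i < d -> nth x0 t i = nth x0 s i) ->
  (forall i, d <= i -> nth x0 t i.+1 = nth x0 s i) -> ed s t <= 1.
Proof.
elim: d => [|d IH] s [|y t] //.
- move=> [Hs] _ H2.
  have -> : s = t by apply/esym/(eq_from_nth (x0 := x0)) => // i _; exact: H2.
  case: t {Hs H2} => [|z t] //. rewrite ed_cons ed_refl.
  by rewrite geq_min; apply/orP; left; rewrite geq_min; apply/orP; right.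
- case: s => [|x s].
    by move=> [/eqP]; rewrite size_eq0 => /eqP -> .
  move=> [Hs] H1 H2.
  have xy : y = x by apply: (H1 0).
  rewrite ed_cons xy eqxx addn0 geq_min; apply/orP; right.
  apply: IH => // [i Hi|i Hi]; [exact: (H1 i.+1)|exact: (H2 i.+1)].
Qed.

Lemma ed_sub_nth (x0 : Sigma) d : forall s t, size s = size t ->
  (forall i, i != d -> nth x0 s i = nth x0 t i) -> ed s t <= 1.
Proof.
elim: d => [|d IH] [|x s] [|y t] //.
- move=> [Hs] H.
  have -> : s = t by apply: (eq_from_nth (x0 := x0)) => // i _; exact: (H i.+1).
  rewrite ed_cons ed_refl add0n geq_min; apply/orP; right; by case: (x != y).
- move=> [Hs] H.
  have xy : x = y by apply: (H 0).
  rewrite ed_cons xy eqxx addn0 geq_min; apply/orP; right.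
  by apply: IH => // i Hi; apply: (H i.+1).
Qed.

End EdLemmas.


Section Str.
Variables (Sigma : eqType) (a b : Sigma).
Hypothesis hab : a != b.

Definition chr (c : bool) := if c then b else a.
Definition str (P : nat -> bool) k := mkseq (fun t => chr (P t)) k.

Lemma chr_inj x y : chr x = chr y -> x = y.
Proof.
by case: x; case: y => //= E; move: hab; rewrite E eqxx.
Qed.

Lemma size_str P k : size (str P k) = k.
Proof. exact: size_mkseq. Qed.

Lemma nth_str P k i : i < k -> nth a (str P k) i = chr (P i).
Proof. by move=> Hi; rewrite /str nth_mkseq. Qed.

Lemma win P n i k : i + k <= n ->
  take k (drop i (str P n)) = str (fun t => P (i + t)) k.
Proof.
move=> H; apply: (eq_from_nth (x0 := a)).
  by rewrite size_takel ?size_str // size_drop size_str; lia.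
move=> t; rewrite size_takel ?size_drop ?size_str; last lia.
move=> Ht; rewrite nth_take // nth_drop !nth_str //; lia.
Qed.

Lemma Substr_str P n k : k <= n -> Substr (str P n) k =
  size (undup [seq str (fun t => P (i + t)) k | i <- iota 0 (n - k).+1]).
Proof.
move=> Hk; rewrite /Substr size_str; congr (size (undup _)).
apply/eq_in_map => i; rewrite mem_iota => /andP[_ Hi]; apply: win; lia.
Qed.

Lemma substr_ub P n k (S : seq nat) : k <= n ->
  (forall i, i <= n - k -> exists2 s, s \in S & forall t, t < k -> P (i + t) = P (s + t)) ->
  Substr (str P n) k <= size S.
Proof.
move=> Hk HS; rewrite Substr_str //.
rewrite -(size_map (fun s => str (fun t => P (s + t)) k)).
apply: uniq_leq_size; first exact: undup_uniq.
move=> x; rewrite mem_undup => /mapP[i]; rewrite mem_iota => /andP[_ Hi] ->.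
have [s sS Hs] := HS i ltac:(lia).
apply/mapP; exists s => //; rewrite /str /mkseq; apply/eq_in_map => t.
by rewrite mem_iota => /andP[_ Ht]; rewrite Hs.
Qed.

Lemma substr_lb P n k (S : seq nat) : k <= n -> uniq S ->
  (forall s, s \in S -> s <= n - k) ->
  {in S &, forall s1 s2, (forall t, t < k -> P (s1 + t) = P (s2 + t)) -> s1 = s2} ->
  size S <= Substr (str P n) k.
Proof.
move=> Hk US HS Hinj; rewrite Substr_str //.
rewrite -(size_map (fun s => str (fun t => P (s + t)) k)).
apply: uniq_leq_size.
  rewrite map_inj_in_uniq // => s1 s2 H1 H2 E; apply: Hinj => // t Ht.
  apply: chr_inj; have := congr1 (fun x => nth a x t) E; rewrite /= !nth_str //.
move=> x /mapP[s sS ->]; rewrite mem_undup; apply/mapP; exists s => //.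
rewrite mem_iota; have := HS s sS; lia.
Qed.

End Str.


Definition BT (L G p : nat) := [|| p == L, p == L+G+1, p == L+G+3, p == L+2*G+4 | p == L+2*G+6].
Definition BT' (L G p : nat) := [|| p == L, p == L+G+1, p == L+G+3, p == L+2*G+4 | p == L+2*G+5].
Definition Ssmall (L G j : nat) := 0 :: iota (L+1-j) j ++ iota (L+G+4-j) (j-2).

Section Fam.
Variables (Sigma : eqType) (a b : Sigma).
Hypothesis hab : a != b.

Lemma shiftT L G i j t : L+G+4 <= i -> i + j <= L+3*G+7 -> t < j ->
  BT L G (i+t) = BT L G (i-(G+3)+t).
Proof. move=> *; rewrite /BT; lia. Qed.

Ltac rep s := exists s; [rewrite /Ssmall inE mem_cat !mem_iota; lia | move=> t ht; rewrite /BT; lia].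

Lemma repA L G j i : 1 <= j <= G+1 -> 1 <= G <= L -> i + j <= L+2*G+4 ->
  exists2 s, s \in Ssmall L G j & forall t, t < j -> BT L G (i+t) = BT L G (s+t).
Proof.
move=> hj hL hi.
have [h|h] := leqP (i+j) L; first by rep 0.
have [h2|h2] := leqP i L; first by rep i.
have [h3|h3] := leqP (i+j) (L+G+1); first by rep 0.
have [h4|h4] := leqP i (L+G+1).
  have [h5|h5] := leqP (L+G+4) (i+j); first by rep i.
  by rep (i - (G+1)).
have [h6|h6] := leqP i (L+G+3).
  have [h7|h7] := leqP (i+j) (L+G+3); first by rep 0.
  by rep (i - (G+3)).
by rep 0.
Qed.

Lemma T_small L G j : 1 <= j <= G+1 -> 1 <= G <= L ->
  Substr (str a b (BT L G) (L+3*G+7)) j <= 2*j.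
Proof.
move=> hj hL.
apply: leq_trans (substr_ub hab (S := Ssmall L G j) _ _) _; first lia.
  move=> i hi; case: (leqP (L+G+4) i) => hi2.
    have hh : i - (G+3) + j <= L+2*G+4 by lia.
    have [s sS Hs] := repA hj hL hh.
    exists s => // t ht; rewrite -Hs //; apply: (shiftT (j := j)); lia.
  apply: repA => //; lia.
rewrite /Ssmall /= size_cat !size_iota; lia.
Qed.

Lemma T_large L G j : G+2 <= j <= L+3*G+7 -> G <= L ->
  Substr (str a b (BT L G) (L+3*G+7)) j <= L+G+4.
Proof.
move=> hj hL.
apply: leq_trans (substr_ub hab (S := iota 0 (L+G+4)) _ _) _; first lia.
  move=> i hi; case: (leqP (L+G+4) i) => hi2.
    exists (i - (G+3)); first by rewrite mem_iota; lia.
    move=> t ht; apply: (shiftT (j := j)); lia.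
  by exists i => //; rewrite mem_iota; lia.
by rewrite size_iota.
Qed.


Definition key (x : seq Sigma) :=
  (index b x, nth a x (index b x).+1 == b, nth a x (index b x).+2 == b).

Lemma index_gen (x : seq Sigma) o : (forall t, t < o -> nth a x t != b) ->
  (o < size x -> nth a x o = b) -> o <= size x -> index b x = o.
Proof.
elim: x o => [|y x IH] [|o] //= H1 H2 H3.
- by rewrite /index /= H2 // eqxx.
- have := H1 0 isT; rewrite /= => /negbTE yb.
  rewrite /index /= yb; congr S; apply: IH => // t ht.
  exact: (H1 t.+1).
Qed.

Lemma nth_str_gen P k m : nth a (str a b P k) m = if m < k then chr a b (P m) else a.
Proof.
case: ifP => h; first by rewrite nth_str.
by rewrite nth_default // size_str leqNgt h.
Qed.

Lemma chrb c : (chr a b c == b) = c.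
Proof. by case: c; rewrite /= ?eqxx // (negbTE hab). Qed.

Lemma key_str P k o : o <= k -> (forall t, t < o -> P t = false) -> (o < k -> P o) ->
  key (str a b P k) = (o, (o.+1 < k) && P o.+1, (o.+2 < k) && P o.+2).
Proof.
move=> h1 h2 h3; rewrite /key.
have -> : index b (str a b P k) = o.
  apply: index_gen; rewrite ?size_str //.
    by move=> t ht; rewrite nth_str ?h2 //= ?(eq_sym a) // (leq_trans ht).
  by move=> ho; rewrite nth_str // h3.
by rewrite !nth_str_gen; case: ifP; case: ifP => //= *; rewrite ?chrb ?(negbTE hab).
Qed.

Lemma substr_lb_key P n k S (sig : nat -> nat * bool * bool) : k <= n -> uniq S ->
  (forall s, s \in S -> s <= n - k) ->
  (forall s, s \in S -> key (str a b (fun t => P (s + t)) k) = sig s) ->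
  {in S &, injective sig} -> size S <= Substr (str a b P n) k.
Proof.
move=> hk uS hS hkey inj; apply: (substr_lb hab) => // s1 s2 h1 h2 H.
apply: inj => //; rewrite -!hkey //; congr key; rewrite /str /mkseq.
by apply/eq_in_map => t; rewrite mem_iota => /andP[_ ht]; rewrite H.
Qed.

End Fam.

Definition Sprime L G := 0 :: iota (L+1-G) G ++ iota (L+4) (G-2) ++ iota (L+G+6) (G-1).
Definition sigF L G s := if s == 0 then (G,false,false) else if s <= L then (L-s,false,false)
  else if s <= L+G+1 then (L+G+1-s,false,true) else (L+2*G+4-s,true,false).

Section Fam2.
Variables (Sigma : eqType) (a b : Sigma).
Hypothesis hab : a != b.

Lemma Tp_lb L G : 2 <= G <= L -> 3*G-2 <= Substr (str a b (BT' L G) (L+3*G+6)) G.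
Proof.
move=> hG.
have -> : 3*G-2 = size (Sprime L G) by rewrite /= !size_cat !size_iota; lia.
apply: (substr_lb_key hab (sig := sigF L G)); first lia.
- rewrite /Sprime /= !cat_uniq !iota_uniq /= !mem_cat !mem_iota /= andbT.
  repeat (apply/andP; split); try lia;
  by apply/hasPn => x; rewrite ?mem_cat !mem_iota; lia.
- by move=> s; rewrite /Sprime inE !mem_cat !mem_iota; lia.
- move=> s; rewrite /Sprime inE !mem_cat !mem_iota => hs; rewrite /sigF.
  case: ifP => h0.
    rewrite (key_str hab (o := G));
      [by congr (_,_,_); rewrite /BT'; lia | lia | by move=> t ht; rewrite /BT'; lia | by move=> *; rewrite /BT'; lia].
  case: ifP => h1.
    rewrite (key_str hab (o := L - s));
      [by congr (_,_,_); rewrite /BT'; lia | lia | by move=> t ht; rewrite /BT'; lia | by move=> *; rewrite /BT'; lia].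
  case: ifP => h2.
    rewrite (key_str hab (o := L + G + 1 - s));
      [by congr (_,_,_); rewrite /BT'; lia | lia | by move=> t ht; rewrite /BT'; lia | by move=> *; rewrite /BT'; lia].
  rewrite (key_str hab (o := L + 2*G + 4 - s));
    [by congr (_,_,_); rewrite /BT'; lia | lia | by move=> t ht; rewrite /BT'; lia | by move=> *; rewrite /BT'; lia].
- move=> s1 s2; rewrite /Sprime !inE !mem_cat !mem_iota => h1 h2; rewrite /sigF.
  by repeat case: ifP => ?; move/eqP; rewrite !xpair_eqE /=; lia.
Qed.

End Fam2.


Section Real.
Variable R : realType.
Local Open Scope ring_scope.

Lemma bigmax_seq_ge (r : seq nat) (F : nat -> R) i : i \in r ->
  F i <= \big[Num.max/0]_(j <- r) F j.
Proof.
elim: r => // x r IH; rewrite inE big_cons => /orP[/eqP->|/IH h].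
  by rewrite le_max lexx.
by rewrite le_max h orbT.
Qed.

Lemma delta_ge (Sigma : eqType) (T : seq Sigma) k : (1 <= k <= size T)%N ->
  (Substr T k)%:R / k%:R <= delta R T.
Proof.
move=> hk; rewrite /delta; apply: (bigmax_seq_ge (fun k => (Substr T k)%:R / k%:R)).
by rewrite mem_index_iota ltnS.
Qed.

Lemma delta_le (Sigma : eqType) (T : seq Sigma) (x : R) : 0 <= x ->
  (forall k, (1 <= k <= size T)%N -> (Substr T k)%:R / k%:R <= x) -> delta R T <= x.
Proof.
move=> x0 H; rewrite /delta big_seq; apply: bigmax_le => // k.
by rewrite mem_index_iota ltnS => /H.
Qed.

Lemma ratio_le (s k p m : nat) : (0 < k)%N -> (0 < m)%N -> (s * m <= p * k)%N ->
  (s%:R / k%:R : R) <= p%:R / m%:R.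
Proof.
move=> hk hm h; rewrite ler_pdivrMr ?ltr0n // mulrAC ler_pdivlMr ?ltr0n //.
by rewrite -!natrM ler_nat.
Qed.

Local Open Scope ereal_scope.

Lemma liminf_ge (u : (\bar R)^nat) (l : R) :
  (forall e : R, (0 < e)%R -> exists N, forall n, (N <= n)%N -> ((l - e)%:E <= u n)) ->
  l%:E <= limn_einf u.
Proof.
move=> H; rewrite limn_einf_lim.
rewrite (cvg_lim _ (ereal_nondecreasing_cvgn (@nondecreasing_einfs R u))) //.
set S := ereal_sup _.
have HS : forall e : R, (0 < e)%R -> (l - e)%:E <= S.
  move=> e /H [N HN]; apply: le_trans (ereal_sup_ubound (x := einfs u N) _); last by exists N.
  rewrite /einfs /=; apply/ereal_infP => _ [k /= hk <-]; exact: HN.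
move: HS; case: S => [s| |] HS //.
- rewrite lee_fin; rewrite leNgt; apply/negP => ls.
  have := HS ((l - s) / 2)%R; rewrite lee_fin; lra.
- exact: leey.
- by have := HS 1%R ltr01; rewrite leeNy_eq.
Qed.

End Real.


Section Main.
Variables (Sigma : finType) (R : realType) (a b : Sigma).
Hypothesis hab : a != b.
Local Open Scope ring_scope.

Definition tupof n (s : seq Sigma) (h : size s == n) : n.-tuple Sigma := Tuple h.

Lemma bigmax2_ge (I J : finType) (P : I -> pred J) (F : I -> J -> \bar R) i j : P i j ->
  (F i j <= \big[Order.max/-oo]_(i : I) \big[Order.max/-oo]_(j : J | P i j) F i j)%E.
Proof.
move=> h; apply: le_trans (le_bigmax _ _ i).
by apply: le_bigmax_cond.
Qed.

Lemma all_substr n k : (1 <= k <= n)%N -> Substr (str a b (fun _ => false) n) k = 1%N.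
Proof.
move=> hk; apply/eqP; rewrite eqn_leq; apply/andP; split.
  apply: (leq_trans (substr_ub hab (S := [:: 0%N]) _ _)) => //; first lia.
  by move=> i hi; exists 0%N => //; rewrite inE.
apply: (leq_trans _ (substr_lb hab (S := [:: 0%N]) _ _ _ _)) => //; first lia.
  by move=> s; rewrite inE => /eqP ->.
by move=> x y; rewrite !inE => /eqP -> /eqP ->.
Qed.

Lemma delta_all n : (1 <= n)%N -> delta R (str a b (fun _ => false) n) = 1.
Proof.
move=> hn; apply/eqP; rewrite eq_le; apply/andP; split.
  apply: delta_le => // k; rewrite size_str => hk; rewrite all_substr //.
  by rewrite ler_pdivrMr ?ltr0n ?mul1r ?ler1n //; lia.
have := @delta_ge R _ (str a b (fun _ => false) n) 1%N.
by rewrite size_str all_substr ?divr1 //; apply; lia.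
Qed.

Lemma delta_two (P : nat -> bool) m s1 s2 : (s1 < m)%N -> (s2 < m)%N -> P s1 = false -> P s2 = true ->
  2 <= delta R (str a b P m).
Proof.
move=> h1 h2 p1 p2.
have hS : (2 <= Substr (str a b P m) 1)%N.
  have -> : 2%N = size [:: s1; s2] by [].
  apply: (substr_lb hab) => //; first lia.
  - apply/andP; split => //; apply/negP; rewrite inE => /eqP e; by move: p1; rewrite e p2.
  - by move=> s; rewrite !in_cons in_nil orbF => /orP[]/eqP->; lia.
  - move=> x y; rewrite !in_cons !in_nil !orbF => /orP[]/eqP-> /orP[]/eqP-> // /(_ 0%N isT); rewrite !addn0 ?p1 ?p2 //.
have := @delta_ge R _ (str a b P m) 1%N; rewrite size_str divr1 => /(_ ltac:(lia)).
apply: le_trans; by rewrite ler_nat.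
Qed.


Lemma sub_part n : (2 <= n)%N ->
  (2%:E <= MS_sub (@delta Sigma R) n)%E /\ (1%:E <= AS_sub (@delta Sigma R) n)%E.
Proof.
move=> hn.
have hT : size (str a b (fun _ => false) n) == n by rewrite size_str.
have hT' : size (str a b (fun p => p == n.-1) n) == n by rewrite size_str.
pose T := tupof hT; pose T' := tupof hT'.
have hed : ed T T' == 1%N.
  rewrite eqn_leq; apply/andP; split.
    apply: (ed_sub_nth (x0 := a) (d := n.-1)); first by rewrite /= !size_str.
    by move=> i hi; rewrite /= !nth_str_gen; case: ifP => // _; rewrite (negbTE hi).
  rewrite lt0n; apply/negP => /eqP /ed_eq0 E.
  have hn1 : (n.-1 < n)%N by lia.
  have := congr1 (fun s => nth a s n.-1) E; rewrite /= !nth_str_gen hn1 eqxx /chr /= => e.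
  by move: hab; rewrite e eqxx.
have dT : delta R T = 1 by apply: delta_all; lia.
have dT' : 2 <= delta R T'.
  by apply: (delta_two (s1 := 0%N) (s2 := n.-1)) => //=; lia.
split.
- rewrite /MS_sub; apply: le_trans (bigmax2_ge (P := fun (T T' : n.-tuple Sigma) => ed T T' == 1%N)
    (fun (T T' : n.-tuple Sigma) => (delta R T' / delta R T)%:E) hed).
  by rewrite dT divr1 lee_fin.
- rewrite /AS_sub; apply: le_trans (bigmax2_ge (P := fun (T T' : n.-tuple Sigma) => ed T T' == 1%N)
    (fun (T T' : n.-tuple Sigma) => (delta R T' - delta R T)%:E) hed).
  rewrite dT lee_fin; lra.
Qed.

Lemma ins_part n : (1 <= n)%N ->
  (2%:E <= MS_ins (@delta Sigma R) n)%E /\ (1%:E <= AS_ins (@delta Sigma R) n)%E.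
Proof.
move=> hn.
have hT : size (str a b (fun _ => false) n) == n by rewrite size_str.
have hT' : size (str a b (fun p => p == n) n.+1) == n.+1 by rewrite size_str.
pose T := tupof hT; pose T' := tupof hT'.
have hed : ed T T' == 1%N.
  rewrite eqn_leq; apply/andP; split.
      apply: (ed_ins_nth (x0 := a) (d := n)); first by rewrite !size_tuple.
      move=> i hi; rewrite /= !nth_str_gen; case: ifP => h1; case: ifP => h2 //; try lia.
      by rewrite (_ : (i == n) = false) //; lia.
    move=> i hi; rewrite !nth_str_gen ltnS; case: ifP => //; lia.
  rewrite lt0n; apply/negP => /eqP /ed_eq0 E.
  by have := congr1 size E; rewrite !size_tuple; lia.
have dT : delta R T = 1 by apply: delta_all; lia.
have dT' : 2 <= delta R T'.
  by apply: (delta_two (s1 := 0%N) (s2 := n)) => //=; lia.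
split.
- rewrite /MS_ins; apply: le_trans (bigmax2_ge (P := fun (T : n.-tuple Sigma) (T' : n.+1.-tuple Sigma) => ed T T' == 1%N)
    (fun (T : n.-tuple Sigma) (T' : n.+1.-tuple Sigma) => (delta R T' / delta R T)%:E) hed).
  by rewrite dT divr1 lee_fin.
- rewrite /AS_ins; apply: le_trans (bigmax2_ge (P := fun (T : n.-tuple Sigma) (T' : n.+1.-tuple Sigma) => ed T T' == 1%N)
    (fun (T : n.-tuple Sigma) (T' : n.+1.-tuple Sigma) => (delta R T' - delta R T)%:E) hed).
  rewrite dT lee_fin; lra.
Qed.


Lemma del_bound n G L : (2 <= G <= L)%N -> (L <= G + 3)%N -> n = (L + 3*G + 7)%N ->
  (((3/2 - 4/G%:R)%:E <= MS_del (@delta Sigma R) n)%E /\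
  ((1 - 5/G%:R)%:E <= AS_del (@delta Sigma R) n)%E).
Proof.
move=> hG hL hn.
have hT : size (str a b (BT L G) (L+3*G+7)) == n by rewrite size_str hn.
have hT' : size (str a b (BT' L G) (L+3*G+6)) == n.-1 by rewrite size_str hn; apply/eqP; lia.
pose T := tupof hT; pose T' := tupof hT'.
have hed : ed T T' == 1%N.
  rewrite eqn_leq; apply/andP; split.
    apply: (ed_del_nth (x0 := a) (d := (L+2*G+5)%N)); first by rewrite !size_tuple; lia.
      move=> i hi; rewrite !nth_str_gen.
      have h1 : (i < L+3*G+7)%N by lia.
      have h2 : (i < L+3*G+6)%N by lia.
      rewrite h1 h2 (_ : BT L G i = BT' L G i) //; rewrite /BT /BT'; lia.
    move=> i hi; rewrite !nth_str_gen.
    case: (ltnP i (L+3*G+6)) => h.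
      rewrite (_ : (i.+1 < L+3*G+7)%N); last lia.
      rewrite (_ : BT L G i.+1 = BT' L G i) //; rewrite /BT /BT'; lia.
    rewrite (_ : (i.+1 < L+3*G+7)%N = false); last lia.
    by [].
  rewrite lt0n; apply/negP => /eqP /ed_eq0 E.
  by have := congr1 size E; rewrite !size_tuple; lia.
have hG0 : (0 < G)%N by lia.
have dTle : delta R T <= (2*G+3)%:R / G%:R.
  apply: delta_le => // k; rewrite size_tuple => hk.
  apply: ratio_le => //; first lia.
  have -> : Substr T k = Substr (str a b (BT L G) (L+3*G+7)) k by [].
  case: (leqP k (G+1)) => hk2.
    have := T_small hab (L := L) (G := G) (j := k) ltac:(lia) ltac:(lia); nia.
  have := T_large hab (L := L) (G := G) (j := k) ltac:(lia) ltac:(lia); nia.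
have dTge : 2 <= delta R T.
  by apply: (delta_two (s1 := 0%N) (s2 := L)) => //=; rewrite /BT; lia.
have dT'ge : (3*G-2)%:R / G%:R <= delta R T'.
  have := @delta_ge R _ T' G; rewrite size_tuple => /(_ ltac:(lia)).
  apply: le_trans; apply: ratio_le => //.
  by rewrite leq_mul2r; apply/orP; right; apply: Tp_lb; lia.
set g := G%:R in dTle dT'ge *.
have g2 : 2 <= g by rewrite /g (ler_nat R 2); lia.
have e1 : (2*G+3)%:R / g = 2 + 3 * g^-1.
  rewrite natrD natrM /g; field; rewrite pnatr_eq0; lia.
have e2 : (3*G-2)%:R / g = 3 - 2 * g^-1.
  rewrite natrB ?natrM /g; last lia; field; rewrite pnatr_eq0; lia.
rewrite e1 in dTle; rewrite e2 in dT'ge.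
have hgi : g^-1 * g = 1 by rewrite mulVf // /g pnatr_eq0; lia.
have ginv0 : 0 < g^-1 by rewrite invr_gt0; lra.
have ginv : 0 < g^-1 <= 1/2.
  apply/andP; split => //; nra.
split.
- rewrite /MS_del; apply: le_trans (bigmax2_ge (P := fun (T : n.-tuple Sigma) (T' : n.-1.-tuple Sigma) => ed T T' == 1%N)
    (fun (T : n.-tuple Sigma) (T' : n.-1.-tuple Sigma) => (delta R T' / delta R T)%:E) hed).
  rewrite lee_fin ler_pdivlMr; last lra.
  rewrite -[4 / g]/(4 * g^-1).
  set e := g^-1 in ginv dTle dT'ge *.
  nra.
- rewrite /AS_del; apply: le_trans (bigmax2_ge (P := fun (T : n.-tuple Sigma) (T' : n.-1.-tuple Sigma) => ed T T' == 1%N)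
    (fun (T : n.-tuple Sigma) (T' : n.-1.-tuple Sigma) => (delta R T' - delta R T)%:E) hed).
  rewrite lee_fin -[5 / g]/(5 * g^-1); lra.
Qed.

End Main.

Unset Implicit Arguments.
Local Open Scope ring_scope.

Theorem mainTheorem1 (Sigma : finType) (R : realType) (hSigma : (1 < #|Sigma|)%N) :
  (forall n : nat, (2 <= n)%N ->
     (2%:E <= MS_sub (@delta Sigma R) n)%E /\ (1%:E <= AS_sub (@delta Sigma R) n)%E) /\
  (forall n : nat, (1 <= n)%N ->
     (2%:E <= MS_ins (@delta Sigma R) n)%E /\ (1%:E <= AS_ins (@delta Sigma R) n)%E) /\
  ((3 / 2)%:E <= limn_einf (fun n => MS_del (@delta Sigma R) n))%E /\
  (1%:E <= limn_einf (fun n => AS_del (@delta Sigma R) n))%E.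
Proof.
have [a [b [_ _ hab]]] := card_gt1P hSigma.
have key : forall e : R, (0 < e)%R -> exists N, forall n, (N <= n)%N ->
    ((3/2 - e)%:E <= MS_del (@delta Sigma R) n)%E /\ ((1 - e)%:E <= AS_del (@delta Sigma R) n)%E.
  move=> e e0.
  have hM := @archi_boundP R (5 / e) ltac:(apply: divr_ge0 => //; exact: ltW).
  set M := Num.Def.archi_bound (5 / e) in hM.
  exists (4 * (M + 2) + 7)%N => n hn.
  set G := ((n - 7) %/ 4)%N; set L := (G + (n - 7) %% 4)%N.
  have hGL : (2 <= G <= L)%N by rewrite /L /G; lia.
  have hL : (L <= G + 3)%N by rewrite /L /G; lia.
  have hn' : n = (L + 3 * G + 7)%N by rewrite /L /G; lia.
  have hGM : (M <= G)%N by rewrite /G; lia.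
  have [h1 h2] := del_bound R hab hGL hL hn'.
  have g0 : (0 < G%:R :> R)%R by rewrite ltr0n; lia.
  have hMG : (M%:R <= G%:R :> R)%R by rewrite ler_nat.
  have h5 : (5 < G%:R * e)%R.
    by rewrite -ltr_pdivrMr //; apply: lt_le_trans hM hMG.
  have h4 : (4 / G%:R <= e)%R.
    by rewrite ler_pdivrMr // mulrC; lra.
  have h5' : (5 / G%:R <= e)%R.
    by rewrite ler_pdivrMr // mulrC; lra.
  split.
    by apply: le_trans h1; rewrite lee_fin; lra.
  by apply: le_trans h2; rewrite lee_fin; lra.
split; first by move=> n hn; exact: (sub_part _ hab hn).
split; first by move=> n hn; exact: (ins_part _ hab hn).
split.
  apply: liminf_ge => e e0; have [N HN] := key e e0.
  by exists N => n hn; case: (HN n hn).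
have -> : (1%:E = (1 : R)%:E)%E by [].
apply: liminf_ge => e e0; have [N HN] := key e e0.
by exists N => n hn; case: (HN n hn).
Qed.
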